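(* Let $\Omega\subseteq\mathbb{R}^n$ be open, $u:\Omega\to\mathbb{R}^N$ continuous, $x\in\Omega$, $\xi\in\mathbb{S}^{N-1}$, $\eta\in\mathbb{S}^{N-1}$ with $\eta^\top\xi=0$, and $A$ a positive semidefinite symmetric $n\times n$ matrix. If $(P,\mathbf{X})\in J^{2,\xi}u(x)$ and $\big(\eta^\top P,\ \eta^\top\mathbf{X}-\frac12A\big)\in J^{2,+}(\eta^\top u)(x)$, then $(P,\mathbf{X}-\eta\otimes A)\in J^{2,\xi}u(x)$.
   Context: $\mathbf{X}=(\mathbf{X}_{\alpha ij})\in\mathbb{R}^N\otimes\mathbb{R}^{n\times n}_s$ is symmetric in $i,j$; $\mathbf{X}:z\otimes z$ has components $\sum_{ij}\mathbf{X}_{\alpha ij}z_iz_j$; $\eta^\top\mathbf{X}:=(\sum_\alpha\eta_\alpha\mathbf{X}_{\alpha ij})_{ij}$, $\eta^\top P\in\mathbb{R}^{1\times n}$, $\eta\otimes A:=(\eta_\alpha A_{ij})$. For $a,b\in\mathbb{R}^N$, $a\vee b:=\frac12(a\otimes b+b\otimes a)$; matrix inequalities in the sense of quadratic forms. Second contact jet: $J^{2,\xi}u(x)$ is the set of $(P,\mathbf{X})\in\mathbb{R}^{N\times n}\times(\mathbb{R}^N\otimes\mathbb{R}^{n\times n}_s)$ for which there is a continuous $T:\mathbb{R}^n\setminus\{0\}\to\mathbb{R}^{N\times N}_s$ with $|T(y)|\to0$ as $y\to0$ and $\xi\vee[u(z)-u(x)-P(z-x)-\frac12\mathbf{X}:(z-x)\otimes(z-x)]\le|z-x|^2T(z-x)$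 for $z\ne x$ near $x$. Scalar second superjet: for $v:\Omega\to\mathbb{R}$, $J^{2,+}v(x)$ is the set of $(p,Y)\in\mathbb{R}^{1\times n}\times\mathbb{R}^{n\times n}_s$ with $v(z)\le v(x)+p(z-x)+\frac12Y:(z-x)\otimes(z-x)+o(|z-x|^2)$ as $z\to x$. *)

(* Defs.v *)
From HB Require Import structures.
From mathcomp Require Import all_boot all_order all_algebra.
From mathcomp Require Import all_classical all_reals all_analysis.
Set Implicit Arguments. Unset Strict Implicit. Unset Printing Implicit Defensive.
Import Order.TTheory GRing.Theory Num.Theory.
Import numFieldNormedType.Exports.
Local Open Scope classical_set_scope.
Local Open Scope ring_scope.

Section Defs.
Variable R : realType.

Definition enorm (k : nat) (v : 'cV[R]_k) : R := Num.sqrt (\sum_i (v i 0) ^+ 2).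

Definition dotc (k : nat) (a b : 'cV[R]_k) : R := \sum_i a i 0 * b i 0.

Definition symmx (k : nat) (A : 'M[R]_k) : Prop := A^T = A.

Definition mxle (k : nat) (A B : 'M[R]_k) : Prop :=
  forall v : 'cV[R]_k, (v^T *m A *m v) 0 0 <= (v^T *m B *m v) 0 0.

Definition psd (k : nat) (A : 'M[R]_k) : Prop := symmx A /\ mxle 0 A.

Definition symprod (k : nat) (a b : 'cV[R]_k) : 'M[R]_k :=
  2^-1 *: (a *m b^T + b *m a^T).

(* X : z (x) z, with X : 'I_N -> 'M_n (a tensor in R^N (x) R^{nxn}_s) *)
Definition tcontr (N n : nat) (X : 'I_N -> 'M[R]_n) (z : 'cV[R]_n) : 'cV[R]_N :=
  \col_a (z^T *m X a *m z) 0 0.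

Definition tdot (N n : nat) (eta : 'cV[R]_N) (X : 'I_N -> 'M[R]_n) : 'M[R]_n :=
  \sum_a eta a 0 *: X a.

Definition ttens (N n : nat) (eta : 'cV[R]_N) (A : 'M[R]_n) : 'I_N -> 'M[R]_n :=
  fun a => eta a 0 *: A.

Definition contact_jet2 (N n : nat) (Omega : set 'cV[R]_n)
    (u : 'cV[R]_n -> 'cV[R]_N) (xi : 'cV[R]_N) (x : 'cV[R]_n)
    (P : 'M[R]_(N, n)) (X : 'I_N -> 'M[R]_n) : Prop :=
  (forall a, symmx (X a)) /\
  exists T : 'cV[R]_n -> 'M[R]_N,
    {within ~` [set 0], continuous T} /\
    (forall y, y != 0 -> symmx (T y)) /\
    (T y @[y --> (0 : 'cV[R]_n)^'] --> (0 : 'M[R]_N)) /\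
    exists delta : R, 0 < delta /\
      forall z, Omega z -> z != x -> enorm (z - x) < delta ->
        mxle (symprod xi (u z - u x - P *m (z - x) - 2^-1 *: tcontr X (z - x)))
             (enorm (z - x) ^+ 2 *: T (z - x)).

Definition superjet2 (n : nat) (Omega : set 'cV[R]_n) (v : 'cV[R]_n -> R)
    (x : 'cV[R]_n) (p : 'rV[R]_n) (Y : 'M[R]_n) : Prop :=
  symmx Y /\
  forall eps : R, 0 < eps -> exists delta : R, 0 < delta /\
    forall z, Omega z -> enorm (z - x) < delta ->
      v z - (v x + (p *m (z - x)) 0 0 + 2^-1 * ((z - x)^T *m Y *m (z - x)) 0 0)
        <= eps * enorm (z - x) ^+ 2.

End Defs.

(* Main.v *)
Require Import Defs.
From HB Require Import structures.
From mathcomp Require Import all_boot all_order all_algebra.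
From mathcomp Require Import all_classical all_reals all_analysis.
From mathcomp Require Import ring lra.
Import Order.TTheory GRing.Theory Num.Theory.
Import numFieldNormedType.Exports.
Local Open Scope classical_set_scope.
Local Open Scope ring_scope.

Section Helpers.
Set Implicit Arguments. Unset Strict Implicit. Unset Printing Implicit Defensive.
Variable R : realType.

Lemma dotcC k (a b : 'cV[R]_k) : dotc a b = dotc b a.
Proof. by rewrite /dotc; apply: eq_bigr => i _; rewrite mulrC. Qed.

Lemma dotcDl k (a b c : 'cV[R]_k) : dotc (a + b) c = dotc a c + dotc b c.
Proof. by rewrite /dotc -big_split; apply: eq_bigr => i _; rewrite !mxE mulrDl. Qed.

Lemma dotcBl k (a b c : 'cV[R]_k) : dotc (a - b) c = dotc a c - dotc b c.
Proof. by rewrite /dotc -sumrB; apply: eq_bigr => i _; rewrite !mxE mulrBl. Qed.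

Lemma dotcZl k s (a c : 'cV[R]_k) : dotc (s *: a) c = s * dotc a c.
Proof. by rewrite /dotc mulr_sumr; apply: eq_bigr => i _; rewrite !mxE mulrA. Qed.

Lemma dotcDr k (a b c : 'cV[R]_k) : dotc c (a + b) = dotc c a + dotc c b.
Proof. by rewrite dotcC dotcDl !(dotcC c). Qed.
Lemma dotcBr k (a b c : 'cV[R]_k) : dotc c (a - b) = dotc c a - dotc c b.
Proof. by rewrite dotcC dotcBl !(dotcC c). Qed.
Lemma dotcZr k s (a c : 'cV[R]_k) : dotc c (s *: a) = s * dotc c a.
Proof. by rewrite dotcC dotcZl (dotcC c). Qed.

Lemma dotc_ge0 k (a : 'cV[R]_k) : 0 <= dotc a a.
Proof. by rewrite /dotc; apply: sumr_ge0 => i _; rewrite -expr2 sqr_ge0. Qed.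

Lemma enorm_sq k (a : 'cV[R]_k) : enorm a ^+ 2 = dotc a a.
Proof.
rewrite /enorm sqr_sqrtr; last by apply: sumr_ge0 => i _; rewrite sqr_ge0.
by apply: eq_bigr => i _; rewrite expr2.
Qed.

Lemma enorm_ge0 k (a : 'cV[R]_k) : 0 <= enorm a.
Proof. exact: sqrtr_ge0. Qed.

Lemma enorm1_dotc k (a : 'cV[R]_k) : enorm a = 1 -> dotc a a = 1.
Proof. by move=> h; rewrite -enorm_sq h expr1n. Qed.

Lemma form_sum k (v : 'cV[R]_k) (M : 'M[R]_k) :
  (v^T *m M *m v) 0 0 = \sum_i \sum_j v i 0 * M i j * v j 0.
Proof.
rewrite mxE; under eq_bigr => j _ do rewrite mxE mulr_suml.
rewrite exchange_big /=; apply: eq_bigr => i _; apply: eq_bigr => j _.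
by rewrite !mxE.
Qed.

Lemma form_dot1 k (v a : 'cV[R]_k) : (v^T *m a) 0 0 = dotc a v.
Proof. by rewrite mxE /dotc; apply: eq_bigr => i _; rewrite mxE mulrC. Qed.

Lemma form_symprod k (v a b : 'cV[R]_k) :
  (v^T *m symprod a b *m v) 0 0 = dotc a v * dotc b v.
Proof.
rewrite /symprod -scalemxAr -scalemxAl mxE mulmxDr mulmxDl.
rewrite mxE.
have E (c d : 'cV[R]_k) : (v^T *m (c *m d^T) *m v) 0 0 = dotc c v * dotc d v.
  rewrite mulmxA -(mulmxA (v^T *m c)) mxE big_ord1 form_dot1; congr (_ * _).
  by rewrite mxE /dotc; apply: eq_bigr => i _; rewrite mxE.
by rewrite E E; field.
Qed.

Lemma form_scale k (v : 'cV[R]_k) s (M : 'M[R]_k) :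
  (v^T *m (s *: M) *m v) 0 0 = s * (v^T *m M *m v) 0 0.
Proof. by rewrite -scalemxAr -scalemxAl mxE. Qed.

Lemma form_id k (v : 'cV[R]_k) : (v^T *m 1%:M *m v) 0 0 = dotc v v.
Proof. by rewrite mulmx1 form_dot1. Qed.

End Helpers.

Section Helpers2.
Set Implicit Arguments. Unset Strict Implicit. Unset Printing Implicit Defensive.
Variable R : realType.

Lemma form_dot2 k (d v : 'cV[R]_k) : (d^T *m v) 0 0 = dotc d v.
Proof. by rewrite mxE /dotc; apply: eq_bigr => i _; rewrite mxE. Qed.

Lemma mx_entry_le k l (M : 'M[R]_(k, l)) i j : `|M i j| <= `|M|.
Proof.
rewrite [leRHS]/Num.norm /= mx_normrE; apply/bigmax_geP; right => /=.
by exists (i, j).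
Qed.

Lemma form_bound k (v : 'cV[R]_k) (M : 'M[R]_k) :
  (v^T *m M *m v) 0 0 <= k%:R * `|M| * dotc v v.
Proof.
rewrite form_sum.
have m0 : 0 <= `|M| by [].
apply: (@le_trans _ _ (\sum_i \sum_(j : 'I_k) (`|M| / 2 * v i 0 ^+ 2 + `|M| / 2 * v j 0 ^+ 2))).
  apply: ler_sum => i _; apply: ler_sum => j _.
  have h1 : v i 0 * M i j * v j 0 <= `|v i 0| * `|M| * `|v j 0|.
    apply: (le_trans (ler_norm _)); rewrite !normrM.
    by apply: ler_wpM2r => //; apply: ler_wpM2l => //; apply: mx_entry_le.
  apply: (le_trans h1).
  rewrite -[v i 0 ^+ 2]real_normK ?num_real // -[v j 0 ^+ 2]real_normK ?num_real //.
  set a := `|v i 0|; set b := `|v j 0|.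
  have : 0 <= `|M| * (a - b) ^+ 2 by apply: mulr_ge0 => //; apply: sqr_ge0.
  move=> H; nra.
under eq_bigr => i _ do rewrite big_split /= sumr_const card_ord.
rewrite big_split /= sumr_const card_ord -sumrMnl.
rewrite sumrMnl -mulr_sumr /dotc.
have -> : \sum_(i < k) v i 0 * v i 0 = \sum_(i < k) v i 0 ^+ 2.
  by apply: eq_bigr => i _; rewrite expr2.
set S := \sum_(i < k) _.
by rewrite -[_ *+ k]mulr_natr le_eqVlt; apply/orP; left; apply/eqP; field.
Qed.


End Helpers2.

Section Helpers3.
Set Implicit Arguments. Unset Strict Implicit. Unset Printing Implicit Defensive.
Variable R : realType.

Lemma enorm_entry k (y : 'cV[R]_k) i : `|y i 0| <= enorm y.
Proof.
rewrite /enorm -sqrtr_sqr; apply: ler_wsqrtr.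
rewrite (bigD1 i) //= lerDl; apply: sumr_ge0 => j _; exact: sqr_ge0.
Qed.

Lemma tcontr_sub N n (X : 'I_N -> 'M[R]_n) (eta : 'cV[R]_N) A h :
  tcontr (fun a => X a - ttens eta A a) h = tcontr X h - ((h^T *m A *m h) 0 0) *: eta.
Proof.
apply/matrixP => i j; rewrite (ord1 j) /ttens /tcontr.
rewrite [LHS]mxE mulmxBr mulmxBl -scalemxAr -scalemxAl.
rewrite !mxE; ring.
Qed.

Lemma dotc_tcontr N n (X : 'I_N -> 'M[R]_n) (eta : 'cV[R]_N) h :
  dotc eta (tcontr X h) = (h^T *m tdot eta X *m h) 0 0.
Proof.
rewrite /tdot mulmx_sumr mulmx_suml summxE /dotc; apply: eq_bigr => a _.
by rewrite -scalemxAr -scalemxAl !mxE.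
Qed.

Lemma dotc_mul N n (eta : 'cV[R]_N) (P : 'M[R]_(N, n)) h :
  dotc eta (P *m h) = (eta^T *m P *m h) 0 0.
Proof. by rewrite -mulmxA form_dot2. Qed.

Lemma bessel k (v xi eta : 'cV[R]_k) :
  dotc xi xi = 1 -> dotc eta eta = 1 -> dotc eta xi = 0 ->
  dotc xi v ^+ 2 + dotc eta v ^+ 2 <= dotc v v.
Proof.
move=> h1 h2 h3.
have := dotc_ge0 (v - dotc xi v *: xi - dotc eta v *: eta).
rewrite !(dotcBl, dotcBr, dotcZl, dotcZr).
rewrite (dotcC v xi) (dotcC v eta) (dotcC xi eta) h1 h2 h3.
move=> H; nra.
Qed.

Lemma key_scalar (a b m V e d q g : R) :
  0 <= e -> 0 <= d -> 0 <= q -> g <= - (q / 4) + d ->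
  a ^+ 2 + b ^+ 2 <= V ->
  (forall t, a * (m + t * g) <= e * (V + 2 * t * b + t ^+ 2)) ->
  a * (m + q / 2 * b) <= (e + d) * V.
Proof.
move=> e0 d0 q0 hg hV H.
have V0 : 0 <= V by apply: le_trans hV; nra.
have [ab0|ab0] := lerP 0 (a * b).
  have := H (- 2 * b) => H1.
  have h2 : a * b * g <= a * b * (- (q / 4) + d) by apply: ler_wpM2l.
  have h4 : 0 <= d * (V - 2 * a * b).
    by apply: mulr_ge0 => //; have := sqr_ge0 (a - b); nra.
  have E1 : e * (V + 2 * (- 2 * b) * b + (- 2 * b) ^+ 2) = e * V by ring.
  rewrite E1 in H1.
  nra.
have := H 0 => H0.
have h3 : a * b * q <= 0 by nra.
have h5 : 0 <= d * V by apply: mulr_ge0.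
have E1 : e * (V + 2 * 0 * b + 0 ^+ 2) = e * V by ring.
rewrite E1 in H0.
nra.
Qed.

End Helpers3.

Section Helpers4.
Set Implicit Arguments. Unset Strict Implicit. Unset Printing Implicit Defensive.
Variable R : realType.

Lemma open_neq0 k : open (~` [set (0 : 'cV[R]_k)]).
Proof.
rewrite openC; apply: accessible_closed_set1.
apply: hausdorff_accessible; exact: norm_hausdorff.
Qed.

Lemma cont_coord (T : topologicalType) p q (f : T -> 'M[R]_(p, q)) x i j :
  {for x, continuous f} -> {for x, continuous (fun y => f y i j)}.
Proof.
move=> cf; apply: (@continuous_comp _ _ _ f (fun M : 'M[R]_(p, q) => M i j)) => //.
exact: coord_continuous.
Qed.

Lemma cont_sumf (T : topologicalType) (I : finType) (f : I -> T -> R) x :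
  (forall i, {for x, continuous (f i)}) ->
  {for x, continuous (fun y => \sum_i f i y)}.
Proof.
move=> cf; apply: cvg_big => //; last by move=> i _; exact: cf.
exact: add_continuous.
Qed.

Lemma enorm_cont k : continuous (@enorm R k).
Proof.
move=> y; apply: (@continuous_comp _ _ _ (fun y : 'cV[R]_k => \sum_i y i 0 ^+ 2)
   (@Num.sqrt R)); last exact: sqrt_continuous.
apply: cont_sumf => i; rewrite /=.
have -> : (fun z : 'cV[R]_k => z i 0 ^+ 2) = (fun z => z i 0 * z i 0).
  by apply/funext => z; rewrite expr2.
by apply: continuousM; apply: cont_coord.
Qed.

Lemma enorm_eq0 k (y : 'cV[R]_k) : enorm y = 0 -> y = 0.
Proof.
move=> h; have : dotc y y = 0 by rewrite -enorm_sq h expr0n.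
rewrite /dotc => /eqP; rewrite psumr_eq0; last by move=> i _; rewrite -expr2 sqr_ge0.
move=> /allP H; apply/matrixP => i j; rewrite (ord1 j) mxE.
by have /(_ (mem_index_enum i)) := H i; rewrite implyTb mulf_eq0 orbb => /eqP.
Qed.

Lemma form_cont k (M : 'M[R]_k) : continuous (fun y : 'cV[R]_k => (y^T *m M *m y) 0 0).
Proof.
move=> y.
have -> : (fun y : 'cV[R]_k => (y^T *m M *m y) 0 0) =
   (fun y => \sum_i \sum_j y i 0 * M i j * y j 0) by apply/funext => z; rewrite form_sum.
apply: cont_sumf => i; apply: cont_sumf => j.
apply: continuousM; last exact: cont_coord.
apply: continuousM; first exact: cont_coord.
exact: cst_continuous.
Qed.

Lemma lin_cont p k (M : 'M[R]_(p, k)) i : continuous (fun y : 'cV[R]_k => (M *m y) i 0).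
Proof.
move=> y.
have -> : (fun y : 'cV[R]_k => (M *m y) i 0) =
   (fun y => \sum_j M i j * y j 0) by apply/funext => z; rewrite mxE.
apply: cont_sumf => j; apply: continuousM; last exact: cont_coord.
exact: cst_continuous.
Qed.

End Helpers4.

Lemma form_sub (R : realType) k (v : 'cV[R]_k) (M1 M2 : 'M[R]_k) :
  (v^T *m (M1 - M2) *m v) 0 0 = (v^T *m M1 *m v) 0 0 - (v^T *m M2 *m v) 0 0.
Proof.
rewrite !form_sum -sumrB; apply: eq_bigr => i _; rewrite -sumrB; apply: eq_bigr => j _.
rewrite !mxE; ring.
Qed.

Lemma enorm_scale (R : realType) k (c : R) (y : 'cV[R]_k) : enorm (c *: y) = `|c| * enorm y.
Proof.
have E : \sum_i (c *: y) i 0 ^+ 2 = c ^+ 2 * \sum_i y i 0 ^+ 2.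
  by rewrite mulr_sumr; apply: eq_bigr => i _; rewrite mxE exprMn.
by rewrite /enorm E sqrtrM ?sqr_ge0 // sqrtr_sqr.
Qed.

Theorem lemma33 (R : realType) (n N : nat) (Omega : set 'cV[R]_n)
    (u : 'cV[R]_n -> 'cV[R]_N) (x : 'cV[R]_n) (xi eta : 'cV[R]_N)
    (A : 'M[R]_n) (P : 'M[R]_(N, n)) (X : 'I_N -> 'M[R]_n) :
  open Omega ->
  {within Omega, continuous u} ->
  Omega x ->
  enorm xi = 1 -> enorm eta = 1 -> dotc eta xi = 0 ->
  psd A ->
  contact_jet2 Omega u xi x P X ->
  superjet2 Omega (fun z => dotc eta (u z)) x (eta^T *m P)
    (tdot eta X - 2^-1 *: A) ->
  contact_jet2 Omega u xi x P (fun a => X a - ttens eta A a).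
Proof.
move=> oO cu Ox nxi neta exi [symA psdA] [symX [T [cT [symT [limT [dl [dl0 HT]]]]]]].
move=> [_ Hsup].
rewrite continuous_open_subspace // in cu.
rewrite continuous_open_subspace in cT; last exact: open_neq0.
have [e0 e00 be0] : exists2 e0 : R, 0 < e0 & forall y, enorm (y - x) < e0 -> Omega y.
  have : nbhs x Omega by apply: open_nbhs_nbhs; split.
  move=> /nbhs_ballP [e e0 He]; exists e => // y hy; apply: He.
  split => // i j; rewrite (ord1 j) /ball /=; apply: le_lt_trans hy.
  rewrite distrC; have := enorm_entry (y - x) i; by rewrite !mxE.
set r := e0 / 2.
have r0 : 0 < r by rewrite /r divr_gt0.
have rlt : r < e0 by rewrite /r ltr_pdivrMr // ltr_pMr // ltr1n.
pose D (k : 'cV[R]_n) := dotc eta (u (x + k)) - (dotc eta (u x) + (eta^T *m P *m k) 0 0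
   + 2^-1 * (k^T *m (tdot eta X - 2^-1 *: A) *m k) 0 0).
pose Eh k := D k / enorm k ^+ 2.
pose clamp (k : 'cV[R]_n) := Num.min 1 (r / enorm k) *: k.
pose sig k := Num.max (Eh (clamp k)) 0.
pose T' k := (N%:R * `|T k| + sig k) *: (1%:M : 'M[R]_N).
have sig0 k : 0 <= sig k by rewrite /sig le_max lexx orbT.
have enorm_gt0 (k : 'cV[R]_n) : k != 0 -> 0 < enorm k.
  move=> k0; rewrite lt_neqAle enorm_ge0 andbT; apply/eqP => /esym/enorm_eq0 h.
  by rewrite h eqxx in k0.
have clampE k : k != 0 -> enorm k < r -> clamp k = k.
  move=> k0 kr; rewrite /clamp (_ : Num.min 1 _ = 1) ?scale1r //.
  apply/min_idPl; rewrite ler_pdivlMr ?enorm_gt0 // mul1r; exact: ltW.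
split.
  move=> a; rewrite /symmx /ttens linearB /= linearZ /= symA symX //.
have Dc : forall k, Omega (x + k) -> {for k, continuous D}.
  move=> k Ok; rewrite /D.
  apply: continuousB.
    rewrite /dotc; apply: cont_sumf => i; apply: continuousM; first exact: cst_continuous.
    apply: (cont_coord (f := fun k => u (x + k))).
    apply: (@continuous_comp _ _ _ (fun k => x + k) u).
      by apply: continuousD; [exact: cst_continuous | exact: cvg_id].
    exact: (cu _ (mem_set Ok)).
  apply: continuousD; first apply: continuousD.
  - exact: cst_continuous.
  - exact: lin_cont.
  apply: continuousM; first exact: cst_continuous.
  exact: form_cont.
have ne0 (k : 'cV[R]_n) : k != 0 -> enorm k != 0 by move=> k0; rewrite gt_eqF ?enorm_gt0.
have clamp_pos (k : 'cV[R]_n) : k != 0 -> 0 < Num.min 1 (r / enorm k).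
  by move=> k0; rewrite lt_min ltr01 divr_gt0 ?enorm_gt0.
have clamp_ne0 (k : 'cV[R]_n) : k != 0 -> clamp k != 0.
  move=> k0; rewrite /clamp scaler_eq0 negb_or k0 andbT gt_eqF //; exact: clamp_pos.
have clamp_le (k : 'cV[R]_n) : k != 0 -> enorm (clamp k) <= r.
  move=> k0; have cp := clamp_pos k k0; rewrite /clamp enorm_scale ger0_norm; last by apply: ltW.
  have hm : Num.min 1 (r / enorm k) <= r / enorm k by rewrite ge_min lexx orbT.
  apply: (le_trans (ler_wpM2r (enorm_ge0 k) hm)).
  by rewrite divfK ?ne0.
have sigc : forall k, k != 0 -> {for k, continuous sig}.
  move=> k k0.
  apply: (@continuous_max _ _ (Eh \o clamp) (fun=> 0)); last exact: cst_continuous.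
  apply: continuous_comp.
    apply: continuousZ; last exact: cvg_id.
    apply: continuous_min; first exact: cst_continuous.
    apply: continuousM; first exact: cst_continuous.
    apply: continuousV; first exact: ne0.
    exact: enorm_cont.
  have ck0 := clamp_ne0 k k0.
  apply: continuousM.
    apply: Dc; apply: be0; rewrite [x + _]addrC addrK.
    exact: le_lt_trans (clamp_le k k0) rlt.
  apply: continuousV; first by rewrite expf_neq0 ?ne0.
  by apply: continuousM; exact: enorm_cont.
exists T'; split.
  rewrite continuous_open_subspace; last exact: open_neq0.
  move=> k /set_mem k0; have {}k0 : k != 0 by apply/eqP.
  rewrite /T'; apply: (continuousZr_tmp (s := fun k => N%:R * `|T k| + sig k)); apply: continuousD; last exact: sigc.
  apply: continuousM; first exact: cst_continuous.
  apply: (@continuous_comp _ _ _ T (fun M : 'M[R]_N => `|M|)); last exact: norm_continuous.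
  by apply: cT; apply: mem_set; apply/eqP.
split.
  by move=> y _; rewrite /symmx /T' linearZ /= trmx1.
split.
  have enorm0 : enorm (0 : 'cV[R]_n) = 0.
    by rewrite /enorm big1 ?sqrtr0 // => i _; rewrite mxE expr0n.
  have csig : sig y @[y --> (0 : 'cV[R]_n)^'] --> (0 : R).
    apply/cvgrPdist_le => eps eps0.
    have [dd [dd0 Hd]] := Hsup eps eps0.
    have ce := @enorm_cont R n 0.
    near=> y.
    have y0 : y != 0 by near: y; exact: nbhs_dnbhs_neq.
    have yr : enorm y < Num.min dd r.
      near: y; apply: nbhs_dnbhs.
      have mpos : enorm (0 : 'cV[R]_n) < Num.min dd r by rewrite enorm0 lt_min dd0 r0.
      exact: (@cvgr_lt R _ _ _ (@enorm R n) (enorm (0:'cV[R]_n)) ce _ mpos).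
    move: yr; rewrite lt_min => /andP[ydd yr].
    rewrite sub0r normrN ger0_norm ?sig0 // /sig clampE // ge_max (ltW eps0) andbT.
    have Oy : Omega (x + y) by apply: be0; rewrite [x + _]addrC addrK; exact: lt_trans yr rlt.
    have := Hd (x + y) Oy; rewrite [x + _]addrC addrK => /(_ ydd) Hy.
    rewrite /Eh ler_pdivrMr ?exprn_gt0 ?enorm_gt0 //.
    by rewrite /D [x + _]addrC.
  rewrite /T' (_ : 0 = (0 : R) *: (1%:M : 'M[R]_N)); last by rewrite scale0r.
  apply: cvgZr_tmp.
  rewrite -[0 : R](addr0 0); apply: cvgD; last exact: csig.
  rewrite -(mulr0 N%:R); apply: cvgM; first exact: cvg_cst.
  rewrite -(@normr0 _ 'M[R]_N); exact: cvg_norm.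
exists (Num.min dl r); split; first by rewrite lt_min dl0 r0.
move=> z Oz zx; rewrite lt_min => /andP[hdl hr].
have HTz := HT z Oz zx hdl.
set h := z - x in HTz hr *.
have h0 : h != 0 by rewrite /h subr_eq0.
have xz : x + h = z by rewrite /h addrC subrK.
set en2 := enorm h ^+ 2.
have en0 : 0 < en2 by rewrite /en2 exprn_gt0 // enorm_gt0.
set q := (h^T *m A *m h) 0 0.
have q0 : 0 <= q by have := psdA h; rewrite mulmx0 mul0mx mxE.
set w := u z - u x - P *m h - 2^-1 *: tcontr X h.
set g := dotc eta w.
have Dg : D h = g + q / 4.
  rewrite /D /g /w xz form_sub form_scale !(dotcBr, dotcZr) dotc_tcontr dotc_mul -/q.
  by field.
have Dle : D h <= sig h * en2.
  have -> : D h = Eh h * en2 by rewrite /Eh /en2 divfK // gt_eqF.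
  by apply: ler_wpM2r; [exact: ltW | rewrite /sig clampE // le_max lexx].
move=> v; rewrite form_symprod form_scale form_scale form_id tcontr_sub.
have -> : dotc (u z - u x - P *m h - 2^-1 *: (tcontr X h - q *: eta)) v =
    dotc w v + q / 2 * dotc eta v.
  by rewrite /w !(dotcBl, dotcZl); ring.
have e0' : 0 <= en2 * (N%:R * `|T h|) by apply: mulr_ge0; [exact: ltW|apply: mulr_ge0].
have d0 : 0 <= en2 * sig h by apply: mulr_ge0; [exact: ltW|].
have hg : g <= - (q / 4) + en2 * sig h.
  by move: Dle; rewrite Dg mulrC; lra.
have hV := bessel v (enorm1_dotc nxi) (enorm1_dotc neta) exi.
have Ht : forall t, dotc xi v * (dotc w v + t * g) <=
    en2 * (N%:R * `|T h|) * (dotc v v + 2 * t * dotc eta v + t ^+ 2).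
  move=> t; have H1 := HTz (v + t *: eta).
  rewrite form_symprod form_scale in H1.
  have H2 := form_bound (v + t *: eta) (T h).
  have H3 : en2 * ((v + t *: eta)^T *m T h *m (v + t *: eta)) 0 0 <=
      en2 * (N%:R * `|T h| * dotc (v + t *: eta) (v + t *: eta)).
    by apply: ler_wpM2l => //; exact: ltW.
  have E1 : dotc xi (v + t *: eta) = dotc xi v.
    by rewrite dotcDr dotcZr (dotcC xi eta) exi mulr0 addr0.
  have E2 : dotc w (v + t *: eta) = dotc w v + t * g.
    by rewrite dotcDr dotcZr (dotcC w eta).
  have E3 : dotc (v + t *: eta) (v + t *: eta) = dotc v v + 2 * t * dotc eta v + t ^+ 2.
    rewrite !(dotcDr, dotcDl, dotcZr, dotcZl) (dotcC v eta) (enorm1_dotc neta); ring.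
  rewrite E1 E2 in H1; rewrite E3 in H3.
  apply: (le_trans (le_trans H1 H3)); rewrite le_eqVlt; apply/orP; left; apply/eqP; ring.
have K := key_scalar e0' d0 q0 hg hV Ht.
apply: (le_trans K); rewrite le_eqVlt; apply/orP; left; apply/eqP; ring.
Unshelve. all: by end_near. Qed.
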